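(* Let $p$ be a positive integer, let $\bar J_1,\dots,\bar J_p\in\mathcal{D}(X)$, and let $\bar J(x)=\min_{i=1,\dots,p}\bar J_i(x)$ for all $x\in X$. Then $\bar J\in\mathcal{D}(X)$.
   Context: Setting: $X$ (state space) and $U$ (control space) are sets; for each $x\in X$, $U(x)\subset U$ is nonempty; $f:X\times U\to X$; the stage cost $g$ satisfies $0\le g(x,u)\le\infty$ for all $x\in X$, $u\in U(x)$. $\mathcal{E}^+(X)$ denotes the set of all functions $J:X\to[0,\infty]$. The Bellman operator $T:\mathcal{E}^+(X)\to\mathcal{E}^+(X)$ is $(TJ)(x)=\inf_{u\in U(x)}\{g(x,u)+J(f(x,u))\}$. The region of decreasing is $\mathcal{D}(X)=\{J\in\mathcal{E}^+(X): (TJ)(x)\le J(x)\ \forall x\in X\}$. Standing assumption: for every $J\in\mathcal{E}^+(X)$ and every $x\in X$, the infimum defining $(TJ)(x)$ is attained. *)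

(* Defs.v *)
From mathcomp Require Import all_boot all_order all_algebra.
From mathcomp Require Import all_classical all_reals all_analysis.
Set Implicit Arguments. Unset Strict Implicit. Unset Printing Implicit Defensive.
Import Order.TTheory GRing.Theory Num.Theory.
Local Open Scope classical_set_scope.
Local Open Scope ereal_scope.

(* Functions J : X -> [0, +oo], represented as X -> \bar R with J >= 0. *)
Definition nonneg_fun (R : realType) (X : Type) (J : X -> \bar R) : Prop :=
  forall x, 0 <= J x.

Definition bellman (R : realType) (X Uc : Type) (Uset : X -> set Uc)
  (f : X -> Uc -> X) (g : X -> Uc -> \bar R) (J : X -> \bar R) : X -> \bar R :=
  fun x => ereal_inf [set g x u + J (f x u) | u in Uset x].

Definition decreasing_region (R : realType) (X Uc : Type) (Uset : X -> set Uc)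
  (f : X -> Uc -> X) (g : X -> Uc -> \bar R) (J : X -> \bar R) : Prop :=
  nonneg_fun J /\ forall x, bellman Uset f g J x <= J x.

(* Main.v *)
Require Import Defs.
From mathcomp Require Import all_boot all_order all_algebra.
From mathcomp Require Import all_classical all_reals all_analysis.
Import Order.TTheory GRing.Theory Num.Theory.
Local Open Scope classical_set_scope.
Local Open Scope ereal_scope.

Theorem proposition3 (R : realType) (X Uc : Type) (Uset : X -> set Uc)
  (f : X -> Uc -> X) (g : X -> Uc -> \bar R)
  (HU : forall x, Uset x !=set0)
  (Hg : forall x u, Uset x u -> 0 <= g x u)
  (Hatt : forall J : X -> \bar R, nonneg_fun J -> forall x,
     exists2 u, Uset x u & bellman Uset f g J x = g x u + J (f x u))
  (p : nat) (Hp : (0 < p)%N) (Jb : 'I_p -> X -> \bar R)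
  (HJ : forall i, decreasing_region Uset f g (Jb i)) :
  decreasing_region Uset f g (fun x => \big[Order.min/+oo]_(i < p) Jb i x).
Proof.
split.
  move=> x; apply: le_bigmin => // i _; exact: (HJ i).1.
move=> x; apply: le_bigmin => [|i _]; first by rewrite leey.
apply: (le_trans _ ((HJ i).2 x)).
apply: le_ereal_inf_tmp => _ [u Hu <-].
set m := (fun y => \big[Order.min/+oo]_(i0 < p) Jb i0 y).
have H1 : m (f x u) <= Jb i (f x u) by exact: bigmin_le.
have H2 : g x u + m (f x u) <= g x u + Jb i (f x u) by exact: leeD2l.
apply: ge_ereal_inf.
exists (g x u + m (f x u)); last exact: H2.
by exists u.
Qed.
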